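(* Let $a=(a_i)_{i\in\mathbb Z}$ be any sequence of complex numbers and $\mu$ a Young diagram. Then $$s_{\mu;a}(x(\mu);y(\mu))=\prod_{(i,j)\in\mu}(a_{\mu_i-i+1}-a_{j-\mu'_j})=\prod_{(i,j)\in\mu}(a_{\mu_i-i+1}+\widehat a_{\mu'_j-j+1}),$$ the products being over the boxes $(i,j)$ (row $i$, column $j$) of $\mu$. If the numbers $a_i$, $i\in\mathbb Z$, are pairwise distinct, then $s_{\mu;a}(x(\mu);y(\mu))\ne0$ for all $\mu$.
   Context: $\Lambda$ is the algebra of symmetric functions over $\mathbb C$ with complete homogeneous $h_k$, elementary $e_k$, power sums $\mathbf p_k$. For a sequence $a$ define $h_{k;a}=\sum_{i=1}^k(-1)^{k-i}e_{k-i}(a_1,\dots,a_{k-1})h_i$ ($k\ge1$), $h_{0;a}=1$, $h_{k;a}=0$ ($k<0$); $(\tau^ra)_i=a_{i+r}$; $s_{\mu;a}=\det[h_{\mu_i-i+j;\,\tau^{1-j}a}]_{i,j=1}^N$ for any $N\ge\ell(\mu)$. Dual sequence: $\widehat a_i=-a_{1-i}$. $\mu'$ is the transposed diagram. Each $f\in\Lambda$ is evaluated at $(x;y)\in\mathbb C^d\times\mathbb C^d$ via $\mathbf p_k\mapsto\sum_ix_i^k+(-1)^{k-1}\sum_jy_j^k$. For a nonempty diagram $\lambda=(p_1,\dots,p_d\mid q_1,\dots,q_d)$ in Frobenius notation ($p_i=\lambda_i-i$, $q_i=\lambda'_i-i$, $d$ the number of diagonal boxes), $(x(\lambda);y(\lambda))=(a_{p_1+1},\dots,a_{p_d+1};\widehat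 a_{q_1+1},\dots,\widehat a_{q_d+1})$; and $(x(\varnothing);y(\varnothing))=(0;0)$. *)

(* Defs.v *)
From HB Require Import structures.
From mathcomp Require Import all_boot all_order all_algebra.
From mathcomp Require Import complex.
From mathcomp Require Import Rstruct.
Set Implicit Arguments. Unset Strict Implicit. Unset Printing Implicit Defensive.
Import Order.TTheory GRing.Theory Num.Theory.
Local Open Scope ring_scope.

Definition CC : fieldType := (Rdefinitions.R)[i].

Definition is_partition (mu : seq nat) : bool :=
  sorted geq mu && all (fun m => 0 < m)%N mu.

(* mu_i, 1-indexed (0 if i > l(mu)). *)
Definition part (mu : seq nat) (i : nat) : nat := nth 0%N mu i.-1.

Definition conj_part (mu : seq nat) (j : nat) : nat :=
  count (fun m => j <= m)%N mu.

Definition diag_len (mu : seq nat) : nat :=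
  count (fun i => i <= part mu i)%N (iota 1 (size mu)).

Definition tau (r : int) (a : int -> CC) : int -> CC := fun i => a (i + r).
Definition dual_seq (a : int -> CC) : int -> CC := fun i => - a (1 - i).

(* Frobenius coordinates p_i = mu_i - i, q_i = mu'_i - i, and the point
   (x(mu); y(mu)) = (a_{p_1+1},...,a_{p_d+1}; hat a_{q_1+1},...,hat a_{q_d+1}). *)
Definition x_pt (mu : seq nat) (a : int -> CC) : seq CC :=
  [seq a ((part mu i)%:Z - i%:Z + 1) | i <- iota 1 (diag_len mu)].
Definition y_pt (mu : seq nat) (a : int -> CC) : seq CC :=
  [seq dual_seq a ((conj_part mu i)%:Z - i%:Z + 1) | i <- iota 1 (diag_len mu)].

Fixpoint esym (s : seq CC) (m : nat) : CC :=
  match s, m with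
  | [::], 0%N => 1
  | [::], _.+1 => 0
  | _ :: _, 0%N => 1
  | x :: s', m'.+1 => esym s' m + x * esym s' m'
  end.

(* p_k |-> sum_i x_i^k + (-1)^(k-1) sum_j y_j^k  (k >= 1) *)
Definition pxy (x y : seq CC) (k : nat) : CC :=
  \sum_(u <- x) u ^+ k + (-1) ^+ k.-1 * \sum_(v <- y) v ^+ k.

(* h_k is expressed through power sums by Newton's identity
   k h_k = sum_{r=1}^k p_r h_{k-r}, h_0 = 1; hl x y n = [:: h_0; ...; h_n]
   evaluated at (x;y). *)
Fixpoint hl (x y : seq CC) (n : nat) : seq CC :=
  match n with
  | 0%N => [:: 1]
  | n'.+1 =>
      let l := hl x y n' in
      rcons l ((n%:R)^-1 * \sum_(r < n) pxy x y r.+1 * nth 0 l (n - r.+1))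
  end.

Definition hxy (x y : seq CC) (k : nat) : CC := nth 0 (hl x y k) k.

Definition hka_xy (x y : seq CC) (a : int -> CC) (k : int) : CC :=
  match k with
  | Posz 0 => 1
  | Posz n.+1 =>
      \sum_(1 <= i < n.+2)
         (-1) ^+ (n.+1 - i) * esym [seq a (Posz j.+1) | j <- iota 0 n] (n.+1 - i)
         * hxy x y i
  | Negz _ => 0
  end.

Definition s_mu_a_xy (mu : seq nat) (a : int -> CC) (x y : seq CC) : CC :=
  \det (\matrix_(i < size mu, j < size mu)
          hka_xy x y (tau (1 - (j.+1)%:Z) a)
                 ((part mu i.+1)%:Z - (i.+1)%:Z + (j.+1)%:Z)).

Definition box_prod1 (mu : seq nat) (a : int -> CC) : CC :=
  \prod_(i < size mu) \prod_(j < part mu i.+1)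
     (a ((part mu i.+1)%:Z - (i.+1)%:Z + 1) - a ((j.+1)%:Z - (conj_part mu j.+1)%:Z)).

Definition box_prod2 (mu : seq nat) (a : int -> CC) : CC :=
  \prod_(i < size mu) \prod_(j < part mu i.+1)
     (a ((part mu i.+1)%:Z - (i.+1)%:Z + 1)
      + dual_seq a ((conj_part mu j.+1)%:Z - (j.+1)%:Z + 1)).

(* Main.v *)
Require Import Defs.
From HB Require Import structures.
From mathcomp Require Import all_boot all_order all_algebra.
From mathcomp Require Import complex.
From mathcomp Require Import Rstruct.
From mathcomp Require Import ring zify.
Import Order.TTheory GRing.Theory Num.Theory.
Local Open Scope ring_scope.
Notation PC := {poly CC}.


Lemma size_prodX n (f : nat -> CC) :
  size (\prod_(m < n) ('X - (f m)%:P)) = n.+1.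
Proof.
rewrite -(big_mkord xpredT (fun m => 'X - (f m)%:P)).
by rewrite size_prod_XsubC size_iota subn0.
Qed.

Lemma monic_prodX n (P : pred 'I_n) (f : 'I_n -> CC) :
  \prod_(m < n | P m) ('X - (f m)%:P) \is monic.
Proof. exact: monic_prod_XsubC. Qed.

Lemma monicN0 {Q : PC} : Q \is monic -> Q != 0.
Proof. by move=> mQ; apply: monic_neq0. Qed.

Lemma size_monic_gt0 {Q : PC} : Q \is monic -> (0 < size Q)%N.
Proof. by move=> mQ; rewrite size_poly_gt0 monic_neq0. Qed.

Lemma top_coef (p Q : PC) i : Q \is monic -> (size p <= i.+1)%N ->
  (p * Q)`_(i + (size Q).-1) = p`_i.
Proof.
move=> mQ sp.
have sQ := size_monic_gt0 mQ.
have [->|p0] := eqVneq p 0; first by rewrite mul0r !coef0.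
have szpq := size_Mmonic p0 mQ.
case: (ltngtP (size p) i.+1) => [lt|gt|eq].
- rewrite [RHS]nth_default; last by [].
  rewrite nth_default // szpq. move: (size p) (size Q) lt sQ => a b. lia.
- by move: gt; rewrite ltnNge sp.
- have : lead_coef (p * Q) = lead_coef p by rewrite lead_coefM (monicP mQ) mulr1.
  rewrite /lead_coef szpq eq. have -> : (i.+1 + size Q).-1.-1 = (i + (size Q).-1)%N by lia.
  by move=> ->.
Qed.

Lemma size_Mmonic_le (p Q : PC) n : Q \is monic ->
  (size (p * Q)%R <= n + (size Q).-1)%N -> (size p <= n)%N.
Proof.
move=> mQ.
have [->|p0] := eqVneq p 0; first by rewrite size_poly0.
rewrite size_Mmonic //. have := size_monic_gt0 mQ. lia.
Qed.

Definition res (Q F : PC) : CC := (F %% Q)`_(size Q).-2.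

Lemma res_mull Q F : res Q (F * Q) = 0.
Proof. by rewrite /res modp_mull coef0. Qed.

Lemma resD Q F G : res Q (F + G) = res Q F + res Q G.
Proof. by rewrite /res modpD coefD. Qed.

Lemma resZ Q c F : res Q (c *: F) = c * res Q F.
Proof. by rewrite /res modpZl coefZ. Qed.

Lemma res0 Q : res Q 0 = 0.
Proof. by rewrite /res mod0p coef0. Qed.

Lemma res_sum Q (I : Type) (r : seq I) (P : pred I) (F : I -> PC) :
  res Q (\sum_(i <- r | P i) F i) = \sum_(i <- r | P i) res Q (F i).
Proof. exact: (big_morph _ (resD Q) (res0 Q)). Qed.

Lemma res_cancel Q Z F : Q \is monic -> Z \is monic ->
  res (Q * Z) (F * Z) = res Q F.
Proof.
move=> mQ mZ.
have sQ := size_monic_gt0 mQ. have sZ := size_monic_gt0 mZ.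
have Q0 := monicN0 mQ.
have szQZ : size (Q * Z) = (size Q + size Z).-1.
  by rewrite size_Mmonic.
set r := F %% Q.
have hr : (size r < size Q)%N by rewrite ltn_modp.
have e : F * Z = (F %/ Q) * (Q * Z) + r * Z.
  by rewrite {1}(divp_eq F Q) -/r mulrDl mulrA.
have srZ : (size (r * Z)%R < size (Q * Z)%R)%N.
  have [->|r0] := eqVneq r 0; first by rewrite mul0r size_poly0 size_Mmonic //; move: (size Q) (size Z) sQ sZ hr => x y; lia.
  rewrite size_Mmonic // size_Mmonic //. move: (size r) (size Q) (size Z) hr sZ => x y z. lia.
rewrite /res -(modpP e srZ) szQZ -/r.
case: (ltnP 1 (size Q)) => hQ.
- have -> : ((size Q + size Z).-1.-2 = (size Q).-2 + (size Z).-1)%N.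
    by move: (size Q) (size Z) hQ sZ => x y; lia.
  rewrite top_coef //. move: (size r) (size Q) hr hQ => x y; lia.
- have -> : r = 0 by apply/eqP; rewrite -size_poly_eq0; move: (size r) (size Q) hr hQ => x y; lia.
  by rewrite mul0r !coef0.
Qed.

Lemma res_eval b W F : W \is monic ->
  res (('X - b%:P) * W) (F * W) = F.[b].
Proof.
move=> mW. rewrite res_cancel ?monicXsubC //.
by rewrite /res modp_XsubC size_XsubC coefC.
Qed.

Lemma sizeM_le {p q : PC} {a b} : (size p <= a)%N -> (size q <= b)%N ->
  (size (p * q)%R <= (a + b).-1)%N.
Proof.
move=> ha hb; apply: leq_trans (size_mul_leq p q) _.
move: (size p) (size q) ha hb => x y; lia.
Qed.

Lemma sizeD_le {p q : PC} {a} : (size p <= a)%N -> (size q <= a)%N ->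
  (size (p + q)%R <= a)%N.
Proof. by move=> ha hb; apply: leq_trans (size_add p q) _; rewrite geq_max ha hb. Qed.

Lemma sizeN_le {p : PC} {a} : (size p <= a)%N -> (size (- p)%R <= a)%N.
Proof. by rewrite size_polyN. Qed.

Lemma sizeB_le {p q : PC} {a} : (size p <= a)%N -> (size q <= a)%N ->
  (size (p - q)%R <= a)%N.
Proof. by move=> ha hb; apply: sizeD_le => //; apply: sizeN_le. Qed.

Lemma size_deriv_le (p : PC) : (size p^`() <= (size p).-1)%N.
Proof.
have [->|p0] := eqVneq p 0; first by rewrite deriv0 size_poly0.
have := lt_size_deriv p0. move: (size p^`()) (size p) => x y; lia.
Qed.

Lemma size_C_le (c : CC) : (size c%:P <= 1)%N.
Proof. exact: size_polyC_leq1. Qed.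

Lemma size_natr_le n : (size (n%:R : PC) <= 1)%N.
Proof. by rewrite -polyC_natr size_C_le. Qed.

Lemma size_X_le : (size ('X : PC) <= 2)%N.
Proof. by rewrite size_polyX. Qed.

Lemma size_Xn_le n : (size ('X^n : PC) <= n.+1)%N.
Proof. by rewrite size_polyXn. Qed.

Definition powP (z : CC) (K : nat) : PC :=
  \sum_(r < K) z ^+ r.+1 *: 'X^(K - r.+1).

Lemma powPS z K : powP z K.+1 = 'X * powP z K + (z ^+ K.+1)%:P.
Proof.
rewrite /powP big_ord_recr /= subnn expr0 alg_polyC mulr_sumr; congr (_ + _).
apply: eq_bigr => r _. rewrite -scalerAr -exprS. congr (_ *: 'X^_).
have := ltn_ord r. lia.
Qed.

Lemma powP_id z K : ('X - z%:P) * powP z K = z%:P * 'X^K - (z ^+ K.+1)%:P.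
Proof.
elim: K => [|K IH]; first by rewrite /powP big_ord0 mulr0 expr0 expr1 mulr1 subrr.
rewrite powPS mulrDr mulrCA IH !exprS !polyCM. ring.
Qed.

Lemma size_powP z K : (size (powP z K) <= K)%N.
Proof.
elim: K => [|K IH]; first by rewrite /powP big_ord0 size_poly0.
rewrite powPS; apply: sizeD_le.
- by apply: leq_trans (sizeM_le size_X_le IH) _.
- by apply: leq_trans (size_C_le _) _.
Qed.

Definition PP (ws : seq CC) K : PC := \sum_(w <- ws) powP w K.

Definition pw (ws : seq CC) r : CC := \sum_(w <- ws) w ^+ r.

Lemma PPE ws K : PP ws K = \sum_(r < K) pw ws r.+1 *: 'X^(K - r.+1).
Proof.
rewrite /PP /powP exchange_big /=; apply: eq_bigr => r _.
by rewrite /pw scaler_suml.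
Qed.

Lemma size_PP ws K : (size (PP ws K) <= K)%N.
Proof.
rewrite /PP; elim: ws => [|w ws IH]; first by rewrite big_nil size_poly0.
by rewrite big_cons; apply: sizeD_le => //; apply: size_powP.
Qed.

Definition prodX (ws : seq CC) : PC := \prod_(w <- ws) ('X - w%:P).

Lemma monic_prodXs ws : prodX ws \is monic.
Proof. exact: monic_prod_XsubC. Qed.

Lemma size_prodXs ws : size (prodX ws) = (size ws).+1.
Proof. exact: size_prod_XsubC. Qed.

Definition Phi (ws : seq CC) K : PC :=
  'X * 'X^K * (prodX ws)^`() - (size ws)%:R * 'X^K * prodX ws - PP ws K * prodX ws.

Lemma size_Phi ws K : (size (Phi ws K) <= size ws)%N.
Proof.
elim: ws => [|w ws IH].
  by rewrite /Phi /prodX /PP !big_nil derivC mulr0 mul0r mulr1 !subrr size_poly0.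
have -> : Phi (w :: ws) K = ('X - w%:P) * Phi ws K + (w ^+ K.+1)%:P * prodX ws.
  have H : (w ^+ K.+1)%:P = w%:P * 'X^K - ('X - w%:P) * powP w K by rewrite powP_id; ring.
  rewrite H /Phi /prodX /PP !big_cons derivM derivXsubC /= -addn1 natrD.
  ring.
apply: sizeD_le.
- have h1 : (size ('X - w%:P)%R <= 2)%N by rewrite size_XsubC.
  apply: leq_trans (sizeM_le h1 IH) _ => /=. by rewrite add1n.
- have h2 : (size (prodX ws) <= (size ws).+1)%N by rewrite size_prodXs.
  apply: leq_trans (sizeM_le (size_C_le _) h2) _ => /=. by rewrite add0n.
Qed.

Lemma size_Xderiv_le (p : PC) : (size ('X * p^`())%R <= size p)%N.
Proof.
have [->|p0] := eqVneq p 0; first by rewrite deriv0 mulr0 size_poly0.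
have h := lt_size_deriv p0. have h2 := size_mul_leq 'X p^`().
rewrite size_polyX in h2. apply: leq_trans h2 _. rewrite add2n /=. exact: h.
Qed.

Lemma coefXderiv (p : PC) i : ('X * p^`())`_i = p`_i *+ i.
Proof. by rewrite coefXM coef_deriv; case: i => [|i] //=; rewrite mulr0n. Qed.

Lemma PPdiff ws1 ws2 K : PP ws1 K - PP ws2 K =
  \sum_(r < K) (pw ws1 r.+1 - pw ws2 r.+1) *: 'X^(K - r.+1).
Proof. by rewrite !PPE -sumrB; apply: eq_bigr => r _; rewrite scalerBl. Qed.

Lemma coef_sumXC (g : nat -> CC) (C : PC) K n : (size C <= K.+1)%N -> (n <= K)%N ->
  ((\sum_(r < K) g r *: 'X^(K - r.+1)) * C)`_(K + (K - n)) =
  \sum_(r < n) g r * C`_(K - (n - r.+1)).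
Proof.
move=> sC nK.
rewrite mulr_suml coef_sum (big_ord_widen K (fun r => g r * C`_(K - (n - r.+1))) nK).
rewrite [RHS]big_mkcond /=; apply: eq_bigr => r _.
rewrite -scalerAl coefZ coefXnM.
have r_lt := ltn_ord r.
have -> : (K + (K - n) < K - r.+1)%N = false by apply/negbTE; rewrite -leqNgt; lia.
case: ifP => rn.
- congr (_ * C`_ _). lia.
- rewrite nth_default ?mulr0 //. apply: leq_trans sC _. move/negbT: rn. rewrite -leqNgt. lia.
Qed.

Lemma pxyE xs ys r : pxy xs ys r.+1 = pw xs r.+1 - pw (map -%R ys) r.+1.
Proof.
rewrite /pxy /pw big_map; congr (_ + _).
rewrite /= -sumrN mulr_sumr; apply: eq_bigr => y _.
by rewrite [(- y) ^+ _]exprNn [(-1) ^+ r.+1]exprS mulN1r mulNr opprK.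
Qed.

Section Newton.
Variables (xs ys : seq CC) (K : nat).
Hypothesis hsz : size ys = size xs.
Hypothesis hK : (0 < K)%N.

Let zs := map -%R ys.
Let D := prodX xs.
Let N := prodX zs.
Definition Cq := ('X^K * N) %/ D.
Let R := ('X^K * N) %% D.
Let d := size xs.

Let szD : size D = d.+1. Proof. by rewrite /D size_prodXs. Qed.
Let szN : size N = d.+1. Proof. by rewrite /N size_prodXs size_map hsz. Qed.
Let mD : D \is monic. Proof. exact: monic_prodXs. Qed.
Let mN : N \is monic. Proof. exact: monic_prodXs. Qed.
Let szR : (size R <= d)%N.
Proof. have := ltn_modp ('X^K * N) D. by rewrite szD monicN0. Qed.

Let E1 : 'X^K * N = Cq * D + R.
Proof. exact: divp_eq. Qed.

Definition Zp := 'X^K * (K%:R * Cq - 'X * Cq^`()) - (PP xs K - PP zs K) * Cq.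

Lemma size_Zp : (size Zp <= K)%N.
Proof.
have E2 : (K%:R * 'X^(K.-1) * N + 'X^K * N^`() = Cq^`() * D + Cq * D^`() + R^`())%R.
  have := congr1 deriv E1.
  by rewrite !derivE mulr_natl.
have PhiD : Phi xs K = 'X * 'X^K * D^`() - d%:R * 'X^K * D - PP xs K * D by [].
have PhiN : Phi zs K = 'X * 'X^K * N^`() - d%:R * 'X^K * N - PP zs K * N.
  by rewrite /Phi size_map hsz.
have szPx := size_PP xs K. have szPz := size_PP zs K.
have szPhx : (size (Phi xs K) <= d)%N by apply: size_Phi.
have szPhz : (size (Phi zs K) <= d)%N by rewrite /d -hsz -(size_map -%R ys); apply: size_Phi.
have [K' eK] : exists K', K = K'.+1 by case: K hK => // K' _; exists K'.
have E1' := E1. rewrite /Zp.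
rewrite eK in E1' E2 PhiD PhiN szPx szPz szPhx szPhz *.
rewrite !exprS /= in E1' E2 PhiD PhiN *. rename E2 into E2'.
set S := 'X^K' in E1' E2' PhiD PhiN *.
set Px := PP xs K'.+1 in PhiD szPx *. set Py := PP zs K'.+1 in PhiN szPz *.
set C := Cq in E1' E2' *.
set kP := (K'.+1)%:R : PC in E2' *.
set RHS := 'X * S * (Phi xs K'.+1 * N - Phi zs K'.+1 * D) - 'X * ('X * S) * D^`() * R
   + 'X * S * D * ('X * R^`() - kP * R) + (Px - Py) * D * R.
have key : D * D * ('X * S * (kP * C - 'X * C^`()) - (Px - Py) * C) = RHS
  + (- ('X * S * kP * D) - 'X * ('X * S) * D^`() + (Px - Py) * D) * ('X * S * N - (C * D + R))
  + 'X * S * 'X * D * (kP * S * N + 'X * S * N^`() - (C^`() * D + C * D^`() + R^`())).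
  rewrite /RHS PhiD PhiN. ring.
rewrite -E1' -E2' !subrr !mulr0 !addr0 in key.
have szS : (size S <= K'.+1)%N by apply: size_Xn_le.
have szRHS : (size RHS <= K'.+1 + d + d)%N.
  have h1 : (size ('X * S)%R <= K'.+2)%N.
    by apply: leq_trans (sizeM_le size_X_le szS) _.
  have hD : (size D <= d.+1)%N by rewrite szD.
  have hN : (size N <= d.+1)%N by rewrite szN.
  have hD' : (size D^`() <= d)%N by apply: leq_trans (size_deriv_le _) _; rewrite szD.
  have hR' : (size ('X * R^`())%R <= d)%N.
    exact: leq_trans (size_Xderiv_le _) szR.
  have hkR : (size (kP * R)%R <= d)%N.
    by apply: leq_trans (sizeM_le (size_natr_le _) szR) _.
  rewrite /RHS; apply: sizeD_le; [apply: sizeD_le; [apply: sizeB_le|]|].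
  - apply: leq_trans (sizeM_le h1 (sizeB_le (sizeM_le szPhx hN) (sizeM_le szPhz hD))) _.
    lia.
  - apply: leq_trans (sizeM_le (sizeM_le (sizeM_le size_X_le h1) hD') szR) _. lia.
  - apply: leq_trans (sizeM_le (sizeM_le h1 hD) (sizeB_le hR' hkR)) _. lia.
  - apply: leq_trans (sizeM_le (sizeM_le (sizeB_le szPx szPz) hD) szR) _. lia.
apply: (@size_Mmonic_le _ (D * D)); first exact: rpredM.
rewrite mulrC key size_Mmonic ?monicN0 // szD.
move: szRHS; lia.
Qed.


Lemma size_Cq : (size Cq <= K.+1)%N.
Proof.
have e : Cq * D = 'X^K * N - R by rewrite E1 addrK.
apply: (@size_Mmonic_le _ D) => //. rewrite e szD /=.
apply: sizeB_le; last by apply: leq_trans szR _; lia.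
rewrite size_monicM ?monicXn ?monicN0 // size_polyXn szN. lia.
Qed.

Lemma Cq_K : Cq`_K = 1.
Proof.
have e : Cq * D = 'X^K * N - R by rewrite E1 addrK.
have := @top_coef Cq D K mD size_Cq. rewrite e szD /= coefB coefXnM.
have -> : (K + d < K)%N = false by lia.
rewrite [R`_ _]nth_default; last by apply: leq_trans szR _; lia.
rewrite subr0 => <-. have -> : (K + d - K = d)%N by lia.
by have := monicP mN; rewrite /lead_coef szN.
Qed.

Lemma newton_Cq n : (0 < n <= K)%N ->
  n%:R * Cq`_(K - n) = \sum_(r < n) pxy xs ys r.+1 * Cq`_(K - (n - r.+1)).
Proof.
move=> /andP[n0 nK].
have z : Zp`_(K + (K - n)) = 0.
  by rewrite nth_default //; apply: leq_trans (size_Zp) _; lia.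
move: z; rewrite /Zp coefB coefXnM.
have -> : (K + (K - n) < K)%N = false by lia.
have -> : (K + (K - n) - K = K - n)%N by lia.
rewrite coefB mulr_natl coefMn coefXderiv -mulrnBr; last by lia.
have -> : (K - (K - n) = n)%N by lia.
rewrite PPdiff (coef_sumXC (fun r => pw xs r.+1 - pw zs r.+1)) //; last exact: size_Cq.
move/eqP; rewrite subr_eq0 => /eqP e.
rewrite mulr_natl e; apply: eq_bigr => r _.
by rewrite pxyE.
Qed.


Lemma res_shift (W : PC) : (size W <= K)%N -> (0 < d)%N -> ((W * Cq)`_(K.-1) = res D (W * N))%R.
Proof.
move=> sW d0.
set q := (W * N) %/ D. set r := (W * N) %% D.
have szr : (size r <= d)%N.
  by have := ltn_modp (W * N) D; rewrite szD monicN0.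
have e : (W * Cq - 'X^K * q) * D = 'X^K * r - W * R.
  apply/eqP; rewrite -subr_eq0; apply/eqP.
  have -> : (W * Cq - 'X^K * q) * D - ('X^K * r - W * R) =
     W * (Cq * D + R - 'X^K * N) - 'X^K * (q * D + r - W * N) by ring.
  by rewrite -E1 -divp_eq !subrr !mulr0 subrr.
have sV : (size (W * Cq - 'X^K * q)%R <= K)%N.
  apply: (@size_Mmonic_le _ D) => //; rewrite e szD /=.
  apply: sizeB_le.
  - apply: leq_trans (sizeM_le (size_Xn_le K) szr) _; lia.
  - apply: leq_trans (sizeM_le sW szR) _; lia.
have := @top_coef (W * Cq - 'X^K * q) D K.-1 mD.
have -> : (K.-1).+1 = K by lia.
move=> /(_ sV). rewrite e szD /= coefB coefXnM.
have -> : (K.-1 + d < K)%N = false by lia.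
rewrite [(W * R)`_ _]nth_default; last first.
  apply: leq_trans (sizeM_le sW szR) _; lia.
rewrite subr0 coefB coefXnM.
have -> : (K.-1 < K)%N by lia.
rewrite subr0 => <-. rewrite /res szD /=. congr (r`_ _). lia.
Qed.

End Newton.

Lemma size_hl x y n : size (hl x y n) = n.+1.
Proof. by elim: n => [|n IH] //=; rewrite size_rcons IH. Qed.

Lemma nth_hl x y n m : (m <= n)%N -> nth 0 (hl x y n) m = hxy x y m.
Proof.
elim: n m => [|n IH] m hm; first by case: m hm.
rewrite leq_eqVlt in hm; case/orP: hm => [/eqP -> //|hm].
by rewrite /= nth_rcons size_hl hm IH.
Qed.

Lemma hxy0 x y : hxy x y 0 = 1.
Proof. by []. Qed.

Lemma hxyS x y n : hxy x y n.+1 =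
  (n.+1%:R)^-1 * \sum_(r < n.+1) pxy x y r.+1 * hxy x y (n.+1 - r.+1).
Proof.
rewrite /hxy /= nth_rcons size_hl ltnn eqxx; congr (_ * _).
apply: eq_bigr => r _; rewrite nth_hl //. lia.
Qed.

Lemma hxy_Cq xs ys K : size ys = size xs -> (0 < K)%N ->
  forall n, (n <= K)%N -> hxy xs ys n = (Cq xs ys K)`_(K - n).
Proof.
move=> hsz hK n.
elim: n {-2}n (leqnn n) => [|n IH] m hm hmK.
  by move: hm; rewrite leqn0 => /eqP ->; rewrite hxy0 subn0 Cq_K.
rewrite leq_eqVlt in hm; case/orP: hm => [/eqP em|hm]; last by apply: IH.
subst m. rewrite hxyS.
have n0 : (n.+1%:R : CC) != 0 by rewrite pnatr_eq0.
apply: (mulfI n0). rewrite mulrA mulfV // mul1r.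
rewrite (@newton_Cq xs ys K hsz hK n.+1); last by rewrite hmK.
apply: eq_bigr => r _. rewrite IH //; lia.
Qed.


Lemma esym_big s m : (size s < m)%N -> Defs.esym s m = 0.
Proof.
elim: s m => [|x s IH] [|m] //= hm.
have h1 : (size s < m)%N by move: hm; rewrite /= ltnS.
by rewrite !IH ?mulr0 ?addr0 // (leq_trans h1).
Qed.

Lemma esym0 s : Defs.esym s 0 = 1.
Proof. by case: s. Qed.

Lemma coef_prodX_esym s m : (m <= size s)%N ->
  (prodX s)`_m = (-1) ^+ (size s - m) * Defs.esym s (size s - m).
Proof.
elim: s m => [|x s IH] m hm.
  by move: hm; rewrite leqn0 => /eqP ->; rewrite /prodX big_nil coef1 /= expr0 mulr1.
rewrite /prodX big_cons -/(prodX s) mulrBl coefB coefXM coefCM /=.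
set n := size s.
case: m hm => [|m] hm.
- rewrite subn0 IH // subn0 /= (@esym_big s n.+1) ?add0r; last by rewrite /n.
  rewrite -/n exprS. ring.
- rewrite /=.
  have -> : (n.+1 - m.+1 = n - m)%N by lia.
  have hmn : (m <= n)%N by move: hm; rewrite /= ltnS.
  rewrite IH // -/n.
  case: (ltngtP m n) => [mn|nm|mn].
  + rewrite IH // -/n.
    have -> : (n - m = (n - m.+1).+1)%N by lia.
    rewrite /= exprS. ring.
  + by move: hmn; rewrite leqNgt nm.
  + subst m. rewrite subnn expr0 mul1r esym0 [(prodX s)`_ _]nth_default ?mulr0 ?subr0 ?mulr1 //.
    by rewrite size_prodXs.
Qed.

Lemma hka_res xs ys (b : int -> CC) n : size ys = size xs -> (0 < size xs)%N ->
  hka_xy xs ys b (Posz n.+1) =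
  res (prodX xs) (prodX [seq b (Posz j.+1) | j <- iota 0 n] * prodX (map -%R ys)).
Proof.
move=> hsz d0.
set bs := [seq b (Posz j.+1) | j <- iota 0 n].
have sbs : size bs = n by rewrite size_map size_iota.
rewrite -(@res_shift xs ys n.+1 hsz (ltn0Sn n) (prodX bs)) //; last by rewrite size_prodXs sbs.
rewrite /hka_xy -/bs big_add1 big_mkord /= coefM.
apply: eq_bigr => i _.
have hi := ltn_ord i.
rewrite (@hxy_Cq xs ys n.+1 hsz (ltn0Sn n)) // coef_prodX_esym sbs; last by lia.
by rewrite subSS.
Qed.

Lemma geq_trans_nat : transitive geq.
Proof. by move=> y x z h1 h2; apply: leq_trans h2 h1. Qed.

Lemma count_sorted (s : seq nat) k i : sorted geq s -> (0 < k)%N ->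
  (i.+1 <= count (fun m => k <= m)%N s)%N = (k <= nth 0 s i)%N.
Proof.
elim: s i => [|x s IH] i ss k0 /=; first by rewrite nth_nil; case: k k0.
have ss' : sorted geq s := path_sorted ss.
have allx : all (geq x) s := order_path_min geq_trans_nat ss.
case: (leqP k x) => kx.
- rewrite /= add1n; case: i => [|i] //=. rewrite ltnS. exact: IH.
- have c0 : count (fun m => k <= m)%N s = 0%N.
    apply/eqP; rewrite -leqn0 leqNgt -has_count; apply/hasPn => y ys.
    have := allP allx y ys; rewrite /= => yx. rewrite -ltnNge. exact: leq_ltn_trans yx kx.
  rewrite /= add0n c0 ltn0; apply/esym/negbTE; rewrite -ltnNge.
  case: i => [|i] //=.
  case: (ltnP i (size s)) => hi.
  + exact: leq_ltn_trans (allP allx _ (mem_nth 0 hi)) kx.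
  + by rewrite nth_default //; apply: leq_ltn_trans kx.
Qed.

Lemma count_iota_closed (q : pred nat) n m : (forall k, q k.+1 -> q k) ->
  (m < count q (iota 0 n))%N = (m < n)%N && q m.
Proof.
move=> qc; elim: n => [|n IH]; first by rewrite /= ltn0.
have -> : iota 0 n.+1 = iota 0 n ++ [:: n] by rewrite -addn1 iotaD.
rewrite count_cat /= addn0.
case qn: (q n).
- have allq : forall k, (k <= n)%N -> q k.
    move=> k kn. have e : k = (n - (n - k))%N by lia.
    rewrite e. elim: (n - k)%N => [|j IHj]; first by rewrite subn0.
    case: (ltnP j n) => jn; last by move: IHj; have -> : (n - j.+1 = n - j)%N by lia.
    apply: qc. have -> : (n - j.+1).+1 = (n - j)%N by lia. exact: IHj.
  have -> : count q (iota 0 n) = n.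
    have := all_count q (iota 0 n). rewrite size_iota.
    have -> : all q (iota 0 n) by apply/allP => k; rewrite mem_iota add0n => /andP[_ kn]; apply: allq; lia.
    by move=> /esym /eqP.
  case: (ltnP m n.+1) => hm; last by rewrite andFb; apply/negbTE; rewrite -leqNgt; lia.
  by rewrite allq ?andbT; lia.
- rewrite addn0 IH. case: (ltngtP m n) => [mn|nm|->].
  + by rewrite ltnS (ltnW mn).
  + by rewrite ltnS leqNgt nm.
  + by rewrite qn !andbF.
Qed.

Section Comb.
Variable mu : seq nat.
Hypothesis pmu : is_partition mu.
Local Notation N := (size mu).

Definition sv (m : nat) : int := (nth 0%N mu m)%:Z - m%:Z.
Definition tv (m : nat) : int := (m.+1)%:Z - (conj_part mu m.+1)%:Z.
Definition Mb := (nth 0%N mu 0 + N).+2%N.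

Lemma smu : sorted geq mu. Proof. by case/andP: pmu. Qed.
Lemma posmu : all (fun m => 0 < m)%N mu. Proof. by case/andP: pmu. Qed.

Lemma nth_mono {i j} : (i <= j)%N -> (nth 0 mu j <= nth 0 mu i)%N.
Proof.
move=> ij. case: (ltnP j N) => hj; last by rewrite nth_default.
have hi : (i < N)%N by apply: leq_ltn_trans ij hj.
have := @sorted_leq_nth nat geq geq_trans_nat (fun x => leqnn x) 0 mu smu i j. by apply.
Qed.

Lemma part_pos i : (i < N)%N -> (0 < nth 0 mu i)%N.
Proof. by move=> hi; apply: (all_nthP 0 posmu). Qed.

Lemma conjE i j : (i.+1 <= conj_part mu j.+1)%N = (j.+1 <= nth 0 mu i)%N.
Proof. exact: count_sorted smu _. Qed.

Lemma conj_mono {i j} : (i <= j)%N -> (conj_part mu j <= conj_part mu i)%N.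
Proof. by move=> ij; apply: sub_count => m /= h; apply: leq_trans ij h. Qed.

Lemma diagE m : (m < diag_len mu)%N = (m.+1 <= nth 0 mu m)%N.
Proof.
have -> : diag_len mu = count (fun m => m.+1 <= nth 0 mu m)%N (iota 0 N).
  rewrite /diag_len -[1%N]addn0 iotaDl count_map; apply: eq_count => k /=.
  by rewrite /part add1n.
rewrite count_iota_closed; last first.
  move=> k hk. apply: leq_trans (ltnW hk) _. exact: nth_mono.
case: (ltnP m N) => hm //=. by rewrite nth_default.
Qed.

Lemma diag_le : (diag_len mu <= N)%N.
Proof. by rewrite /diag_len; apply: leq_trans (count_size _ _) _; rewrite size_iota. Qed.

Lemma sv_mono {i j} : (i < j)%N -> sv j < sv i.
Proof. move=> ij; have := nth_mono (ltnW ij); rewrite /sv; lia. Qed.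

Lemma tv_mono {i j} : (i < j)%N -> tv i < tv j.
Proof. move=> ij; have h : (i.+1 <= j.+1)%N by rewrite ltnS ltnW. have := conj_mono h; rewrite /tv; lia. Qed.

Lemma sv_inj i j : sv i = sv j -> i = j.
Proof.
move=> e; case: (ltngtP i j) => // h.
- by have := sv_mono h; rewrite e ltxx.
- by have := sv_mono h; rewrite e ltxx.
Qed.

Lemma tv_inj i j : tv i = tv j -> i = j.
Proof.
move=> e; case: (ltngtP i j) => // h.
- by have := tv_mono h; rewrite e ltxx.
- by have := tv_mono h; rewrite e ltxx.
Qed.

Lemma sv_tv i m : sv i != tv m.
Proof.
apply/eqP; rewrite /sv /tv. have := conjE i m.
case h: (m.+1 <= nth 0 mu i)%N => hc.
- move: h hc; lia.
- move: h hc; lia.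
Qed.

Lemma tv_cover (c : int) : 1 - N%:Z <= c -> c <= (nth 0%N mu 0)%:Z + 1 ->
  (forall i, (i < N)%N -> sv i != c) -> exists m, (m < Mb)%N /\ tv m = c.
Proof.
move=> c1 c2 nS.
have ex : exists i, sv i < c.
  by exists N; rewrite /sv nth_default //; lia.
case: (ex_minnP ex) => i hi hmin.
have iN : (i <= N)%N.
  apply: hmin. by rewrite /sv nth_default //; lia.
have hlt : forall j, (j < i)%N -> c < sv j.
  move=> j ji. have hj : ~~ (sv j < c) by apply/negP => /hmin; lia.
  have := nS j (leq_trans ji iN). move: hj. lia.
have hpos : 0 <= c + i%:Z - 1 by move: hi; rewrite /sv; lia.
exists (absz (c + i%:Z - 1)%R).
have ejn : ((absz (c + i%:Z - 1)%R).+1)%:Z = c + i%:Z by lia.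
set jn := absz _ in ejn *.
have hconj : conj_part mu jn.+1 = i.
  apply/eqP; rewrite eqn_leq; apply/andP; split.
  - rewrite leqNgt conjE. move: hi; rewrite /sv. lia.
  - case: (posnP i) => [-> //|ipos].
    have ei : i = i.-1.+1 by rewrite prednK.
    have h : c < sv i.-1 by apply: hlt; rewrite ltn_predL. move: h; rewrite /sv => h.
    rewrite {1}ei conjE. move: h ejn ipos; lia.
split.
- rewrite /Mb. move: ejn c2 iN; lia.
- rewrite /tv hconj. lia.
Qed.

End Comb.
Arguments nth_mono {mu} pmu {i j}.
Arguments conjE {mu} pmu i j.
Arguments diagE {mu} pmu m.
Arguments diag_le {mu}.
Arguments sv_mono {mu} pmu {i j}.
Arguments tv_mono {mu} pmu {i j}.
Arguments sv_inj {mu} pmu {i j}.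
Arguments tv_inj {mu} pmu {i j}.
Arguments sv_tv {mu} pmu i m.
Arguments tv_cover {mu} pmu c.
Arguments part_pos {mu} pmu {i}.

Ltac blia := first [ lia | apply/idP/idP => ?; lia | apply/negbTE; apply/negP => ?; lia ].

Lemma big_iota0 (F : nat -> PC) n : \prod_(i <- iota 0 n) F i = \prod_(m < n) F m.
Proof. by rewrite -(big_mkord xpredT) /index_iota subn0. Qed.

Lemma big_iota1 (F : nat -> PC) n : \prod_(i <- iota 1 n) F i = \prod_(m < n) F m.+1.
Proof.
rewrite -(big_iota0 (fun m => F m.+1)) -[1%N]addn0 iotaDl big_map.
by apply: eq_bigr => m _; rewrite add1n.
Qed.

Section Prods.
Variable mu : seq nat.
Hypothesis pmu : is_partition mu.
Variable a : int -> CC.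
Local Notation N := (size mu).
Local Notation sv := (sv mu).
Local Notation tv := (tv mu).

Definition Qc (c : int) : PC := \prod_(m < N | c <= sv m) ('X - (a (sv m))%:P).
Definition Pc (c : int) : PC := \prod_(m < Mb mu | tv m < c) ('X - (a (tv m))%:P).
Definition Pi (lo : int) (n : nat) : PC := \prod_(m < n) ('X - (a (lo + m%:Z))%:P).

Lemma monic_Qc c : Qc c \is monic. Proof. exact: monic_prod_XsubC. Qed.
Lemma monic_Pc c : Pc c \is monic. Proof. exact: monic_prod_XsubC. Qed.
Lemma monic_Pi lo n : Pi lo n \is monic. Proof. exact: monic_prod_XsubC. Qed.
Lemma size_Pi lo n : size (Pi lo n) = n.+1.
Proof. exact: (size_prodX n (fun m => a (lo + m%:Z))). Qed.

Lemma Pi_split lo n1 n2 : Pi lo (n1 + n2) = Pi lo n1 * Pi (lo + n1%:Z) n2.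
Proof.
rewrite /Pi big_split_ord /=; congr (_ * _); apply: eq_bigr => m _.
by rewrite /= PoszD addrA.
Qed.

Lemma step (c : int) : 1 - N%:Z <= c -> c <= (nth 0%N mu 0)%:Z ->
  (Qc c = ('X - (a c)%:P) * Qc (c + 1) /\ Pc (c + 1) = Pc c) \/
  (Qc c = Qc (c + 1) /\ Pc (c + 1) = ('X - (a c)%:P) * Pc c).
Proof.
move=> c1 c2.
case: (boolP [exists i : 'I_N, sv i == c]) => [/existsP [i /eqP ei]|/existsPn hn].
- left; split.
  + rewrite /Qc (bigD1 i) /=; last by rewrite ei.
    rewrite ei; congr (_ * _); apply: eq_bigl => m /=.
    case: (eqVneq m i) => [->|mi]; first by rewrite ei andbF; blia.
    have : sv m != c.
      apply/negP => /eqP h; apply: (negP mi); apply/eqP/val_inj.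
      by apply: (sv_inj pmu); rewrite h ei.
    rewrite andbT => h. blia.
  + rewrite /Pc; apply: eq_bigl => m /=.
    have := sv_tv pmu i m. rewrite ei => h. blia.
- right; split.
  + rewrite /Qc; apply: eq_bigl => m /=. have h := hn m. blia.
  + have [m0 [hm0 e]] : exists m, (m < Mb mu)%N /\ tv m = c.
      apply: tv_cover => //; first lia.
      by move=> i hi; apply: (hn (Ordinal hi)).
    rewrite /Pc (bigD1 (Ordinal hm0)) /=; last by rewrite e; lia.
    rewrite e; congr (_ * _); apply: eq_bigl => m /=.
    case: (eqVneq m (Ordinal hm0)) => [->|mi] /=; first by rewrite e andbF; blia.
    have : tv m != c.
      apply/negP => /eqP h; apply: (negP mi); apply/eqP/val_inj.
      by apply: (tv_inj pmu); rewrite h e.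
    rewrite andbT => h. blia.
Qed.

Lemma shiftQP n (c : int) g : 1 - N%:Z <= c -> c + n%:Z <= (nth 0%N mu 0)%:Z + 1 ->
  res (Qc c) (Pc c * Pi c n * g) = res (Qc (c + n%:Z)) (Pc (c + n%:Z) * g).
Proof.
elim: n c => [|n IH] c h1 h2; first by rewrite /Pi big_ord0 mulr1 addr0.
have ePi : Pi c n.+1 = ('X - (a c)%:P) * Pi (c + 1) n.
  rewrite /Pi big_ord_recl /= addr0; congr (_ * _); apply: eq_bigr => m _.
  congr ('X - (a _)%:P). rewrite /bump /=. lia.
have h3 : c + (n.+1)%:Z = (c + 1) + n%:Z by lia.
rewrite ePi h3 -IH; [|lia|lia].
case: (@step c h1 _) => [|[eQ eP]|[eQ eP]]; first lia.
- rewrite eQ eP.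
  have -> : Pc c * (('X - (a c)%:P) * Pi (c + 1) n) * g =
     (Pc c * Pi (c + 1) n * g) * ('X - (a c)%:P) by ring.
  by rewrite [('X - _) * Qc _]mulrC res_cancel ?monic_Qc ?monicXsubC.
- rewrite eQ eP. congr res. ring.
Qed.

Lemma Qc_sv i : (i < N)%N -> Qc (sv i) = \prod_(m < i.+1) ('X - (a (sv m))%:P).
Proof.
move=> hi.
rewrite (big_ord_widen N (fun m => 'X - (a (sv m))%:P) hi) /Qc.
apply: eq_bigl => m /=.
case: (ltngtP m i) => [mi|im|->].
- have h := sv_mono pmu mi. blia.
- have h := sv_mono pmu im. blia.
- by rewrite lexx leqnn.
Qed.

Lemma Pc_sv i : (i < N)%N -> Pc (sv i) = \prod_(m < nth 0%N mu i) ('X - (a (tv m))%:P).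
Proof.
move=> hi.
have hle : (nth 0%N mu i <= Mb mu)%N.
  rewrite /Mb. have := nth_mono pmu (leq0n i). lia.
rewrite (big_ord_widen (Mb mu) (fun m => 'X - (a (tv m))%:P) hle) /Pc.
apply: eq_bigl => m /=.
have hc := conjE pmu i m. rewrite /tv /sv.
case: (leqP m.+1 (nth 0%N mu i)) => h.
- rewrite h in hc. blia.
- have hc' : ~~ (i.+1 <= conj_part mu m.+1)%N by rewrite hc -ltnNge h. blia.
Qed.

Lemma Qc1 : Qc 1 = \prod_(m < diag_len mu) ('X - (a (sv m))%:P).
Proof.
rewrite (big_ord_widen N (fun m => 'X - (a (sv m))%:P) diag_le) /Qc.
apply: eq_bigl => m /=. rewrite diagE // /sv. blia.
Qed.

Lemma Pc1 : Pc 1 = \prod_(m < diag_len mu) ('X - (a (tv m))%:P).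
Proof.
have hle : (diag_len mu <= Mb mu)%N.
  have := @diag_le mu. rewrite /Mb. lia.
rewrite (big_ord_widen (Mb mu) (fun m => 'X - (a (tv m))%:P) hle) /Pc.
apply: eq_bigl => m /=. rewrite diagE // /tv -conjE //. blia.
Qed.

Lemma prod_xpt : prodX (x_pt mu a) = Qc 1.
Proof.
rewrite Qc1 /prodX /x_pt big_map big_iota1.
apply: eq_bigr => m _; congr ('X - (a _)%:P). rewrite /part /sv /=. lia.
Qed.

Lemma prod_ypt : prodX (map -%R (y_pt mu a)) = Pc 1.
Proof.
rewrite Pc1 /prodX /y_pt -map_comp big_map big_iota1.
apply: eq_bigr => m _. rewrite /= /dual_seq opprK. congr ('X - (a _)%:P).
rewrite /tv. lia.
Qed.

End Prods.
Arguments step {mu} pmu a c.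
Arguments shiftQP {mu} pmu a n c g.
Arguments Qc_sv {mu} pmu a i.
Arguments Pc_sv {mu} pmu a i.
Arguments Qc1 {mu} pmu a.
Arguments Pc1 {mu} pmu a.
Arguments prod_xpt {mu} pmu a.
Arguments prod_ypt {mu} pmu a.

Lemma poly_expand (p : PC) n : (size p <= n)%N -> p = \sum_(l < n) p`_l *: 'X^l.
Proof.
move=> sp; rewrite -poly_def; apply/polyP => l; rewrite coef_poly.
by case: ifP => // /negbT; rewrite -leqNgt => h; rewrite nth_default //; apply: leq_trans sp h.
Qed.

Lemma det_coefmx n (f : 'I_n -> PC) : (forall j, f j \is monic) ->
  (forall j : 'I_n, size (f j) = j.+1) -> \det (\matrix_(l < n, j < n) (f j)`_l) = 1.
Proof.
move=> mf sf. rewrite -det_tr det_trig.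
- rewrite (eq_bigr (fun _ => 1)) ?big1_eq // => j _.
  rewrite !mxE. have := monicP (mf j). by rewrite /lead_coef sf.
- apply/forallP => i; apply/forallP => j; apply/implyP => ij.
  rewrite !mxE nth_default // sf. exact: ij.
Qed.

Lemma det_change n (Q P : 'I_n -> PC) (f g : 'I_n -> PC) :
  (forall j, f j \is monic) -> (forall j : 'I_n, size (f j) = j.+1) ->
  (forall j, g j \is monic) -> (forall j : 'I_n, size (g j) = j.+1) ->
  \det (\matrix_(i < n, j < n) res (Q i) (P i * f j)) =
  \det (\matrix_(i < n, j < n) res (Q i) (P i * g j)).
Proof.
move=> mf sf mg sg.
set A := \matrix_(i < n, l < n) res (Q i) (P i * 'X^l).
have key : forall h : 'I_n -> PC, (forall j : 'I_n, size (h j) = j.+1) ->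
   \matrix_(i < n, j < n) res (Q i) (P i * h j) = A *m \matrix_(l < n, j < n) (h j)`_l.
  move=> h sh; apply/matrixP => i j; rewrite !mxE.
  rewrite (@poly_expand (h j) n); last by rewrite sh.
  rewrite mulr_sumr res_sum; apply: eq_bigr => l _.
  by rewrite !mxE -scalerAr resZ mulrC.
by rewrite (key f sf) (key g sg) !det_mulmx det_coefmx // det_coefmx.
Qed.

Lemma res_small (Q F : PC) : (size F < size Q)%N -> res Q F = F`_((size Q).-2).
Proof. by move=> h; rewrite /res modp_small. Qed.

Lemma prod_split (F : nat -> PC) k j : (k <= j)%N ->
  \prod_(m < j) F m = \prod_(m < k) F m * \prod_(k <= m < j) F m.
Proof.
move=> kj. by rewrite -!(big_mkord xpredT) (big_cat_nat (leq0n k) kj).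
Qed.

Section Final.
Variable mu : seq nat.
Hypothesis pmu : is_partition mu.
Variable a : int -> CC.
Local Notation N := (size mu).
Local Notation sv := (sv mu).
Local Notation tv := (tv mu).

Lemma entry (i j : nat) : (i < N)%N -> (j < N)%N ->
  hka_xy (x_pt mu a) (y_pt mu a) (tau (1 - (j.+1)%:Z) a)
     ((part mu i.+1)%:Z - (i.+1)%:Z + (j.+1)%:Z)
  = res (Qc mu a (sv i)) (Pc mu a (sv i) * Pi a (1 - j%:Z) j).
Proof.
move=> hi hj.
have hsz : size (y_pt mu a) = size (x_pt mu a) by rewrite !size_map.
have N0 : (0 < N)%N by apply: leq_ltn_trans hi.
have d0 : (0 < size (x_pt mu a))%N.
  rewrite size_map size_iota (diagE pmu 0). exact: (@part_pos mu pmu 0%N N0).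
have esv : (part mu i.+1)%:Z - (i.+1)%:Z + (j.+1)%:Z = sv i + j%:Z.
  by rewrite /part /sv /=; lia.
have hpi := part_pos pmu hi.
have h0 := nth_mono pmu (leq0n i).
rewrite esv.
have sF : size (Pc mu a (sv i) * Pi a (1 - j%:Z) j) = (nth 0%N mu i + j).+1.
  rewrite size_Mmonic ?monicN0 ?monic_Pi ?monic_Pc // (Pc_sv pmu a i hi) (size_prodX _ (fun m => a (tv m))) size_Pi.
  by rewrite addSn addnS.
have mF : Pc mu a (sv i) * Pi a (1 - j%:Z) j \is monic by rewrite rpredM ?monic_Pc ?monic_Pi.
have sQ : size (Qc mu a (sv i)) = i.+2 by rewrite (Qc_sv pmu a i hi) (size_prodX _ (fun m => a (sv m))).
case E: (sv i + j%:Z) => [[|n]|n].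
- rewrite /hka_xy res_small sQ /=; last by rewrite sF; move: E; rewrite /sv; lia.
  have := monicP mF. rewrite /lead_coef sF /=.
  have -> : (nth 0%N mu i + j = i)%N by move: E; rewrite /sv; lia.
  by move=> ->.
- rewrite hka_res // (prod_xpt pmu a) (prod_ypt pmu a).
  have ePi : prodX [seq tau (1 - (j.+1)%:Z) a (Posz m.+1) | m <- iota 0 n] = Pi a (1 - j%:Z) n.
    rewrite /prodX big_map big_iota0 /Pi; apply: eq_bigr => m _; rewrite /tau.
    congr ('X - (a _)%:P); lia.
  rewrite ePi.
  case: (lerP 1 (sv i)) => hs.
  + set s' := absz (sv i - 1).
    have en : n = (j + s')%N by rewrite /s'; move: E hs; lia.
    rewrite en Pi_split (_ : 1 - j%:Z + j%:Z = 1); last lia.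
    rewrite (_ : Pi a (1 - j%:Z) j * Pi a 1 s' * Pc mu a 1 =
                 Pc mu a 1 * Pi a 1 s' * Pi a (1 - j%:Z) j); last ring.
    rewrite (shiftQP pmu a); [|lia|rewrite /s'; move: hs h0; rewrite /sv; lia].
    by rewrite (_ : 1 + s'%:Z = sv i) // /s'; move: hs; lia.
  + set t := absz (1 - sv i).
    have ej : j = (n + t)%N by rewrite /t; move: E hs; lia.
    have eP : Pi a (1 - j%:Z) j = Pi a (1 - j%:Z) n * Pi a (sv i) t.
      have -> : Pi a (1 - j%:Z) j = Pi a (1 - j%:Z) (n + t) by rewrite -ej.
      rewrite Pi_split; congr (_ * Pi a _ t); move: E; lia.
    rewrite eP.
    rewrite (_ : Pc mu a (sv i) * (Pi a (1 - j%:Z) n * Pi a (sv i) t) =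
                 Pc mu a (sv i) * Pi a (sv i) t * Pi a (1 - j%:Z) n); last ring.
    rewrite (shiftQP pmu a); [|move: hpi hi; rewrite /sv; lia|rewrite /t; move: hs h0; rewrite /sv; lia].
    rewrite (_ : sv i + t%:Z = 1); last by rewrite /t; move: hs; lia.
    by rewrite mulrC.
- rewrite /hka_xy res_small sQ /=; last by rewrite sF; move: E; rewrite NegzE /sv; lia.
  rewrite nth_default // sF. move: E; rewrite NegzE /sv; lia.
Qed.

Definition om (j : nat) : PC := \prod_(m < j) ('X - (a (sv m))%:P).

Lemma main_eq : s_mu_a_xy mu a (x_pt mu a) (y_pt mu a) = box_prod1 mu a.
Proof.
rewrite /s_mu_a_xy.
have -> : \matrix_(i < N, j < N) hka_xy (x_pt mu a) (y_pt mu a) (tau (1 - (j.+1)%:Z) a)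
            ((part mu i.+1)%:Z - (i.+1)%:Z + (j.+1)%:Z)
        = \matrix_(i < N, j < N) res (Qc mu a (sv i)) (Pc mu a (sv i) * Pi a (1 - j%:Z) j).
  by apply/matrixP => i j; rewrite !mxE entry.
rewrite (@det_change N (fun i : 'I_N => Qc mu a (sv i)) (fun i : 'I_N => Pc mu a (sv i))
   (fun j : 'I_N => Pi a (1 - j%:Z) j) (fun j : 'I_N => om j)); last first.
- by move=> j; rewrite /om (size_prodX _ (fun m => a (sv m))).
- by move=> j; apply: monic_prod_XsubC.
- by move=> j; rewrite size_Pi.
- by move=> j; apply: monic_Pi.
rewrite det_trig; last first.
  apply/forallP => i; apply/forallP => j; apply/implyP => ij; rewrite !mxE.
  rewrite /om (@prod_split (fun m => 'X - (a (sv m))%:P) i.+1 j ij) -(Qc_sv pmu a i (ltn_ord i)).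
  by rewrite mulrCA mulrC res_mull.
rewrite /box_prod1; apply: eq_bigr => i _; rewrite mxE.
have -> : Qc mu a (sv i) = ('X - (a (sv i))%:P) * om i.
  by rewrite (Qc_sv pmu a i (ltn_ord i)) big_ord_recr /= mulrC.
rewrite res_eval; last exact: monic_prod_XsubC.
rewrite (Pc_sv pmu a i (ltn_ord i)) horner_prod /part /=.
apply: eq_bigr => m _. rewrite hornerXsubC. congr (a _ - a _).
rewrite /sv; lia.
Qed.

End Final.

Lemma box12 mu a : box_prod1 mu a = box_prod2 mu a.
Proof.
rewrite /box_prod1 /box_prod2; apply: eq_bigr => i _; apply: eq_bigr => j _.
rewrite /dual_seq. congr (_ - a _). lia.
Qed.

Theorem theorem11 :
  (forall (a : int -> CC) (mu : seq nat), is_partition mu ->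
     s_mu_a_xy mu a (x_pt mu a) (y_pt mu a) = box_prod1 mu a /\
     box_prod1 mu a = box_prod2 mu a) /\
  (forall a : int -> CC, injective a ->
     forall mu : seq nat, is_partition mu ->
       s_mu_a_xy mu a (x_pt mu a) (y_pt mu a) != 0).
Proof.
split.
- move=> a mu pmu; split; [exact: main_eq | exact: box12].
- move=> a ia mu pmu. rewrite main_eq //.
  apply/prodf_neq0 => i _; apply/prodf_neq0 => j _.
  rewrite subr_eq0; apply/eqP => /ia.
  have := sv_tv pmu i j. rewrite /sv /tv /part /=.
  move=> h e. move: h. rewrite -e. apply/negP. rewrite negbK. apply/eqP. lia.
Qed.
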